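(* Let $\mathcal{A}\subseteq\mathbb{R}^3$ be measurable with finite positive measure, $k_0,\eta>0$, and for $k\in\{1,2\}$ let $\mathsf{G}_k\in L^2(\mathcal{A})$ with $\mathsf{g}_k=\int_{\mathcal{A}}|\mathsf{G}_k|^2>0$, $\mathsf{H}_k=\frac{\mathrm{j}k_0\eta}{\sqrt{4\pi}}\mathsf{G}_k$, $A_{\mathsf{u},k}>0$, $\sigma_k>0$, $\hat{\mathsf{H}}_k=\frac{\sqrt{A_{\mathsf{u},k}}}{\sigma_k}\mathsf{H}_k$, and let $\rho=\frac{\int_{\mathcal{A}}\mathsf{G}_1^*\mathsf{G}_2}{\sqrt{\mathsf{g}_1\mathsf{g}_2}}$. Let $\mathsf{P}>0$ and let $\mathsf{J}_{\mathsf{dl},1},\mathsf{J}_{\mathsf{dl},2}\in L^2(\mathcal{A})$ satisfy $\sum_{k=1}^2\int_{\mathcal{A}}|\mathsf{J}_{\mathsf{dl},k}|^2\le\mathsf{P}$. Define $$\mathsf{P}_2=\frac{|\int_{\mathcal{A}}\hat{\mathsf{H}}_2\mathsf{J}_{\mathsf{dl},2}|^2}{\int_{\mathcal{A}}|\hat{\mathsf{H}}_2|^2\,\big(1+|\int_{\mathcal{A}}\hat{\mathsf{H}}_2\mathsf{J}_{\mathsf{dl},1}|^2\big)},\qquad \mathsf{P}_1=\frac{|\int_{\mathcal{A}}\hat{\mathsf{H}}_1\mathsf{J}_{\mathsf{dl},1}|^2}{\int_{\mathcal{A}}|\hat{\mathsf{H}}_1|^2-\frac{\mathsf{P}_2|\int_{\mathcal{A}}\hat{\mathsf{H}}_1^*\hat{\mathsf{H}}_2|^2}{1+\mathsf{P}_2\int_{\mathcal{A}}|\hat{\mathsf{H}}_2|^2}},$$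 and $\overline{\gamma}_{k}=\frac{A_{\mathsf{u},k}k_0^2\eta^2}{4\pi\sigma_k^2}\mathsf{P}_k$. Then the dual uplink sum-rate with this power allocation (SIC order $1\rightarrow2$), $$\log_2\!\Big(1+\overline{\gamma}_1\mathsf{g}_1\Big(1-\tfrac{\overline{\gamma}_2\mathsf{g}_2|\rho|^2}{1+\overline{\gamma}_2\mathsf{g}_2}\Big)\Big)+\log_2(1+\overline{\gamma}_2\mathsf{g}_2),$$ equals the downlink sum-rate under dirty-paper coding with order $2\rightarrow1$, $$\log_2\Big(1+\Big|\int_{\mathcal{A}}\hat{\mathsf{H}}_1\mathsf{J}_{\mathsf{dl},1}\Big|^2\Big)+\log_2\Big(1+\frac{|\int_{\mathcal{A}}\hat{\mathsf{H}}_2\mathsf{J}_{\mathsf{dl},2}|^2}{1+|\int_{\mathcal{A}}\hat{\mathsf{H}}_2\mathsf{J}_{\mathsf{dl},1}|^2}\Big),$$ and $\mathsf{P}_1+\mathsf{P}_2\le\sum_{k=1}^2\int_{\mathcal{A}}|\mathsf{J}_{\mathsf{dl},k}|^2\le\mathsf{P}$.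
   Context: Integrals without variable are over $\mathbf{r}\in\mathcal{A}$. In the paper $\mathcal{A}$ is the base-station continuous aperture, $\mathsf{G}_k(\mathbf{r})=\frac{e^{-\mathrm{j}k_0\|\mathbf{r}-\mathbf{s}_k\|}}{\sqrt{4\pi}\|\mathbf{r}-\mathbf{s}_k\|}\sqrt{\frac{|\mathbf{e}^{\mathsf{T}}(\mathbf{s}_k-\mathbf{r})|}{\|\mathbf{r}-\mathbf{s}_k\|}}$ (user locations $\mathbf{s}_k\notin\overline{\mathcal{A}}$, aperture normal $\mathbf{e}$), $\mathsf{J}_{\mathsf{dl},k}$ are downlink source current distributions, $A_{\mathsf{u},k}$ user apertures and $\sigma_k^2$ noise intensities. *)

(* Defs.v *)
From HB Require Import structures.
From mathcomp Require Import all_boot all_order all_algebra.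
From mathcomp Require Import all_classical all_reals all_analysis.
From mathcomp Require Import complex.
Set Implicit Arguments.
Unset Strict Implicit.
Unset Printing Implicit Defensive.
Import Order.TTheory GRing.Theory Num.Theory.
Import numFieldNormedType.Exports.
Local Open Scope classical_set_scope.
Local Open Scope ring_scope.

Definition R3 (R : realType) := ((R * R) * R)%type.

Definition leb3 (R : realType) :=
  product_measure1
    (product_measure1 (@lebesgue_measure R) (@lebesgue_measure R))
    (@lebesgue_measure R).

Definition cabs2 (R : realType) (z : R[i]) : R := complex.Re z ^+ 2 + complex.Im z ^+ 2.

Definition cconj (R : realType) (z : R[i]) : R[i] := (complex.Re z +i* (- complex.Im z))%C.

Definition cL2 (R : realType) (A : set (R3 R)) (f : R3 R -> R[i]) : Prop :=
  [/\ measurable_fun A (fun x => complex.Re (f x)),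
      measurable_fun A (fun x => complex.Im (f x)) &
      (@leb3 R).-integrable A (fun x => (cabs2 (f x))%:E)].

Definition rint (R : realType) (A : set (R3 R)) (f : R3 R -> R) : R :=
  Rintegral (@leb3 R) A f.

Definition cint (R : realType) (A : set (R3 R)) (f : R3 R -> R[i]) : R[i] :=
  (rint A (fun x => complex.Re (f x)) +i* rint A (fun x => complex.Im (f x)))%C.

Definition log2 (R : realType) (x : R) : R := ln x / ln 2.

(* Main.v *)
From HB Require Import structures.
From mathcomp Require Import all_boot all_order all_algebra.
From mathcomp Require Import all_classical all_reals all_analysis.
From mathcomp Require Import complex ring lra measurable_realfun.
Require Import Defs.
Import Order.TTheory GRing.Theory Num.Theory.
Import numFieldNormedType.Exports.
Local Open Scope classical_set_scope.
Local Open Scope ring_scope.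

Section Alg.
Variable R : realFieldType.

Definition Qf (q n1 n2 a1 b1 a2 b2 g h x1 x2 x3 x4 x5 : R) :=
  q*x1^+2 + n1*(x2^+2+x3^+2) + n2*(x4^+2+x5^+2) + 2*x1*(a1*x2+b1*x3+a2*x4+b2*x5)
  + 2*(g*(x2*x4+x3*x5) + h*(x2*x5 - x3*x4)).

Lemma disc (a b c : R) : 0 < b -> (forall l, 0 <= a - 2 * b * l + c * l ^+ 2) -> b ^+ 2 <= a * c.
Proof.
move=> b0 H.
have [c0|c0] := ltrP 0 c.
  have := H (b / c).
  have -> : a - 2 * b * (b / c) + c * (b / c) ^+ 2 = (a * c - b ^+ 2) / c.
    by field; rewrite gt_eqF.
  by move=> h1; have := mulr_ge0 h1 (ltW c0); rewrite divfK ?gt_eqF // subr_ge0.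
have := H ((a + 1) / (2 * b)).
have -> : a - 2 * b * ((a + 1) / (2 * b)) = -1.
  by field; rewrite gt_eqF // mulr_gt0.
move=> h; exfalso.
have : c * ((a + 1) / (2 * b)) ^+ 2 <= 0.
  by rewrite mulr_le0_ge0 // sqr_ge0.
lra.
Qed.

Lemma keyQ q n1 n2 a1 b1 a2 b2 g h p :
  0 <= p -> 0 < n2 ->
  (forall x1 x2 x3 x4 x5, 0 <= Qf q n1 n2 a1 b1 a2 b2 g h x1 x2 x3 x4 x5) ->
  g ^+ 2 + h ^+ 2 <= n1 * n2 /\
  a1 ^+ 2 + b1 ^+ 2 <= (n1 - p * (g ^+ 2 + h ^+ 2) / (1 + p * n2)) * (q + p * (a2 ^+ 2 + b2 ^+ 2)).
Proof.
move=> p0 n20 HQ; split.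
  have := HQ 0 n2 0 (-g) (-h).
  have -> : Qf q n1 n2 a1 b1 a2 b2 g h 0 n2 0 (-g) (-h) = n2 * (n1 * n2 - (g ^+ 2 + h ^+ 2)).
    by rewrite /Qf; ring.
  by rewrite pmulr_rge0 // subr_ge0.
set E := 1 + p * n2.
have E0 : 0 < E by have := mulr_ge0 p0 (ltW n20); rewrite /E; lra.
set Qm := fun x1 x2 x3 x4 x5 => Qf q n1 n2 a1 b1 a2 b2 g h x1 x2 x3 x4 x5 +
   p * ((a2 * x1 + g * x2 - h * x3 + n2 * x4) ^+ 2 + (b2 * x1 + h * x2 + g * x3 + n2 * x5) ^+ 2).
have HQm : forall x1 x2 x3 x4 x5, 0 <= Qm x1 x2 x3 x4 x5.
  move=> x1 x2 x3 x4 x5; rewrite /Qm; apply: addr_ge0 => //.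
  by apply: mulr_ge0 => //; apply: addr_ge0; exact: sqr_ge0.
set kr := p * g / E; set ki := p * h / E.
set Dd := n1 - p * (g ^+ 2 + h ^+ 2) / E.
set W := q + p * (a2 ^+ 2 + b2 ^+ 2).
set S := a1 ^+ 2 + b1 ^+ 2.
have D0 : 0 <= Dd.
  have := HQm 0 1 0 (- kr) (- ki).
  have -> // : Qm 0 1 0 (- kr) (- ki) = Dd.
  rewrite /Qm /Qf /Dd /kr /ki /=. move: E0; rewrite /E => E0; field; by rewrite gt_eqF.
have [S0|S0] := eqVneq S 0.
  by rewrite S0 mulr_ge0 // /W addr_ge0 //; [have := HQ 1 0 0 0 0; rewrite /Qf; lra|
    apply: mulr_ge0 => //; apply: addr_ge0; exact: sqr_ge0].
have Sp : 0 < S by rewrite lt0r S0 /S addr_ge0 // sqr_ge0.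
have := @disc W S (S * Dd) Sp.
have H : forall l, 0 <= W - 2 * S * l + S * Dd * l ^+ 2.
  move=> l; have := HQm 1 (-l * a1) (-l * b1) (-l * (-a1 * kr + b1 * ki)) (-l * (-a1 * ki - b1 * kr)).
  have -> // : Qm 1 (-l * a1) (-l * b1) (-l * (-a1 * kr + b1 * ki)) (-l * (-a1 * ki - b1 * kr))
     = W - 2 * S * l + S * Dd * l ^+ 2.
  rewrite /Qm /Qf /W /S /Dd /kr /ki /=; move: E0; rewrite /E => E0; field; by rewrite gt_eqF.
move=> /(_ H).
rewrite expr2 mulrA (mulrC W) -mulrA ler_pM2l //.
by rewrite mulrC.
Qed.


Definition mn (i j : nat) := if Nat.leb i j then i else j.
Definition mx (i j : nat) := if Nat.leb i j then j else i.
Definition quad6 (m : nat -> nat -> R) (c : nat -> R) :=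
  \sum_(i <- iota 0 6) \sum_(j <- iota 0 6) c i * c j * m (mn i j) (mx i j).

Lemma keyM (m : nat -> nat -> R) p :
  0 <= p -> (forall c, 0 <= quad6 m c) -> 0 < m 4%N 4%N + m 5%N 5%N ->
  let q := m 0%N 0%N + m 1%N 1%N in
  let n1 := m 2%N 2%N + m 3%N 3%N in
  let n2 := m 4%N 4%N + m 5%N 5%N in
  let a1 := m 0%N 2%N - m 1%N 3%N in
  let b1 := m 0%N 3%N + m 1%N 2%N in
  let a2 := m 0%N 4%N - m 1%N 5%N in
  let b2 := m 0%N 5%N + m 1%N 4%N in
  let g := m 2%N 4%N + m 3%N 5%N in
  let h := m 2%N 5%N - m 3%N 4%N in
  g ^+ 2 + h ^+ 2 <= n1 * n2 /\
  a1 ^+ 2 + b1 ^+ 2 <= (n1 - p * (g ^+ 2 + h ^+ 2) / (1 + p * n2)) * (q + p * (a2 ^+ 2 + b2 ^+ 2)).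
Proof.
move=> p0 H n20 q n1 n2 a1 b1 a2 b2 g h.
apply: keyQ => // x1 x2 x3 x4 x5.
have h1 := H (fun i => nth 0 [:: x1; 0; x2; x3; x4; x5] i).
have h2 := H (fun i => nth 0 [:: 0; x1; x3; -x2; x5; -x4] i).
have -> : Qf q n1 n2 a1 b1 a2 b2 g h x1 x2 x3 x4 x5 =
  quad6 m (fun i => nth 0 [:: x1; 0; x2; x3; x4; x5] i) +
  quad6 m (fun i => nth 0 [:: 0; x1; x3; -x2; x5; -x4] i).
  rewrite /quad6 /= !big_cons !big_nil /mn /mx /= /Qf /q /n1 /n2 /a1 /b1 /a2 /b2 /g /h.
  ring.
exact: addr_ge0.
Qed.

Lemma keyM' (m : nat -> nat -> R) p q n1 n2 a1 b1 a2 b2 g h :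
  0 <= p -> (forall c, 0 <= quad6 m c) ->
  q = m 0%N 0%N + m 1%N 1%N -> n1 = m 2%N 2%N + m 3%N 3%N -> n2 = m 4%N 4%N + m 5%N 5%N ->
  a1 = m 0%N 2%N - m 1%N 3%N -> b1 = m 0%N 3%N + m 1%N 2%N ->
  a2 = m 0%N 4%N - m 1%N 5%N -> b2 = m 0%N 5%N + m 1%N 4%N ->
  g = m 2%N 4%N + m 3%N 5%N -> h = m 2%N 5%N - m 3%N 4%N -> 0 < n2 ->
  g ^+ 2 + h ^+ 2 <= n1 * n2 /\
  a1 ^+ 2 + b1 ^+ 2 <= (n1 - p * (g ^+ 2 + h ^+ 2) / (1 + p * n2)) * (q + p * (a2 ^+ 2 + b2 ^+ 2)).
Proof.
move=> p0 H -> -> -> -> -> -> -> -> -> n20.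
by have := @keyM m p p0 H n20.
Qed.

End Alg.

Lemma reM (R : realType) (z w : R[i]) : complex.Re (z * w) = complex.Re z * complex.Re w - complex.Im z * complex.Im w.
Proof. by case: z => a b; case: w => c d. Qed.
Lemma imM (R : realType) (z w : R[i]) : complex.Im (z * w) = complex.Re z * complex.Im w + complex.Im z * complex.Re w.
Proof. by case: z => a b; case: w => c d. Qed.

Section Gen.
Context {d} {T : measurableType d} {R : realType} (mu : {measure set T -> \bar R}) (D : set T).
Hypothesis mD : measurable D.

Definition sqi (f : T -> R) := measurable_fun D f /\ mu.-integrable D (EFin \o (fun x => f x ^+ 2)).

Lemma norm_prod_le (a b : R) : `|a * b| <= `|a ^+ 2 + b ^+ 2|.
Proof.
rewrite (ger0_norm (_ : 0 <= a ^+ 2 + b ^+ 2)); last by rewrite addr_ge0 // sqr_ge0.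
rewrite ler_norml; apply/andP; split; nra.
Qed.

Lemma int_prod f g : sqi f -> sqi g -> mu.-integrable D (EFin \o (fun x => f x * g x)).
Proof.
move=> [mf If] [mg Ig].
apply: (@le_integrable _ _ _ mu D mD _ (EFin \o (fun x => f x ^+ 2 + g x ^+ 2))).
- by apply/measurable_EFinP; apply: measurable_funM.
- by move=> x _ /=; rewrite lee_fin norm_prod_le.
- apply: (eq_integrable mD ((EFin \o (fun x => f x ^+ 2)) \+ (EFin \o (fun x => g x ^+ 2)))).
    by move=> x _ /=.
  exact: integrableD.
Qed.

Lemma sqiZ k f : sqi f -> sqi (fun x => k * f x).
Proof.
move=> [mf If]; split; first by apply: measurable_funM => //; exact: measurable_cst.
apply: (eq_integrable mD _ _ _ (integrableZl mD (k ^+ 2) If)).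
by move=> x _ /=; rewrite exprMn.
Qed.

Lemma Rint_sum (I : Type) (s : seq I) (F : I -> T -> R) :
  (forall i, mu.-integrable D (EFin \o F i)) ->
  mu.-integrable D (EFin \o (fun x => \sum_(i <- s) F i x)) /\
  \int[mu]_(x in D) (\sum_(i <- s) F i x) = \sum_(i <- s) \int[mu]_(x in D) F i x.
Proof.
move=> IF; elim: s => [|i s [IH1 IH2]].
  rewrite big_nil; split.
    apply: (eq_integrable mD (cst 0%E)); first by move=> x _ /=; rewrite big_nil.
    exact: integrable0.
  under eq_Rintegral do rewrite big_nil.
  by rewrite Rintegral_cst // mul0r.
split.
  apply: (eq_integrable mD ((EFin \o F i) \+ (EFin \o (fun x => \sum_(i <- s) F i x)))).
    by move=> x _ /=; rewrite big_cons.
  exact: integrableD.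
under eq_Rintegral do rewrite big_cons.
by rewrite RintegralD // big_cons IH2.
Qed.

Lemma quad_int (s : seq (R * nat)) (phi : nat -> T -> R) :
  (forall n, sqi (phi n)) ->
  \int[mu]_(x in D) ((\sum_(p <- s) p.1 * phi p.2 x) ^+ 2) =
  \sum_(p <- s) \sum_(q <- s) p.1 * q.1 * \int[mu]_(x in D) (phi p.2 x * phi q.2 x).
Proof.
move=> Hphi.
have Ipq : forall p q : R * nat, mu.-integrable D (EFin \o (fun x => p.1 * q.1 * (phi p.2 x * phi q.2 x))).
  move=> p q.
  apply: (eq_integrable mD _ _ _ (integrableZl mD (p.1 * q.1) (int_prod _ _ (Hphi p.2) (Hphi q.2)))).
  by move=> x _.
transitivity (\int[mu]_(x in D) (\sum_(p <- s) \sum_(q <- s) p.1 * q.1 * (phi p.2 x * phi q.2 x))).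
  apply: eq_Rintegral => x _.
  rewrite expr2 big_distrl /=; apply: eq_bigr => p _.
  rewrite big_distrr /=; apply: eq_bigr => q _.
  by rewrite mulrACA.
have Hin : forall p : R * nat, mu.-integrable D (EFin \o (fun x => \sum_(q <- s) p.1 * q.1 * (phi p.2 x * phi q.2 x))).
  by move=> p; exact: (proj1 (@Rint_sum _ s (fun q x => p.1 * q.1 * (phi p.2 x * phi q.2 x)) (Ipq p))).
rewrite (proj2 (@Rint_sum _ s (fun p x => \sum_(q <- s) p.1 * q.1 * (phi p.2 x * phi q.2 x)) Hin)).
apply: eq_bigr => p _.
rewrite (proj2 (@Rint_sum _ s (fun q x => p.1 * q.1 * (phi p.2 x * phi q.2 x)) (Ipq p))).
apply: eq_bigr => q _.
by rewrite RintegralZl //; exact: int_prod.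
Qed.

Lemma psd6 (phi : nat -> T -> R) : (forall n, sqi (phi n)) ->
  forall c, 0 <= @quad6 R (fun i j => \int[mu]_(x in D) (phi i x * phi j x)) c.
Proof.
move=> Hphi c.
have E := @quad_int [seq (c i, i) | i <- iota 0 6] phi Hphi.
have : 0 <= \int[mu]_(x in D) ((\sum_(p <- [seq (c i, i) | i <- iota 0 6]) p.1 * phi p.2 x) ^+ 2).
  by apply: Rintegral_ge0 => x _; exact: sqr_ge0.
rewrite E big_map /quad6.
under eq_bigr do rewrite big_map.
move=> h; apply: (le_trans h); rewrite le_eqVlt; apply/orP; left; apply/eqP.
apply: eq_bigr => i _; apply: eq_bigr => j _ /=.
rewrite /mn /mx; case: Nat.leb => //; congr (_ * _); apply: eq_Rintegral => x _; exact: mulrC.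
Qed.

Lemma sqi0 : sqi (fun _ => 0).
Proof.
split; first exact: measurable_cst.
apply: (eq_integrable mD _ _ _ (integrable0 mu D)) => x _ /=.
by rewrite expr0n.
Qed.

Lemma rint_mulRe (f g : T -> R[i]) :
  sqi (fun x => complex.Re (f x)) -> sqi (fun x => complex.Im (f x)) ->
  sqi (fun x => complex.Re (g x)) -> sqi (fun x => complex.Im (g x)) ->
  \int[mu]_(x in D) complex.Re (g x * f x) =
  \int[mu]_(x in D) (complex.Re (f x) * complex.Re (g x)) - \int[mu]_(x in D) (complex.Im (f x) * complex.Im (g x)).
Proof.
move=> rf if_ rg ig.
rewrite -RintegralB //; try exact: int_prod.
apply: eq_Rintegral => x _; rewrite reM; ring.
Qed.

Lemma rint_mulIm (f g : T -> R[i]) :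
  sqi (fun x => complex.Re (f x)) -> sqi (fun x => complex.Im (f x)) ->
  sqi (fun x => complex.Re (g x)) -> sqi (fun x => complex.Im (g x)) ->
  \int[mu]_(x in D) complex.Im (g x * f x) =
  \int[mu]_(x in D) (complex.Re (f x) * complex.Im (g x)) + \int[mu]_(x in D) (complex.Im (f x) * complex.Re (g x)).
Proof.
move=> rf if_ rg ig.
rewrite -RintegralD //; try exact: int_prod.
apply: eq_Rintegral => x _; rewrite imM; ring.
Qed.

Lemma rint_conjRe (f g : T -> R[i]) :
  sqi (fun x => complex.Re (f x)) -> sqi (fun x => complex.Im (f x)) ->
  sqi (fun x => complex.Re (g x)) -> sqi (fun x => complex.Im (g x)) ->
  \int[mu]_(x in D) complex.Re (cconj (f x) * g x) =
  \int[mu]_(x in D) (complex.Re (f x) * complex.Re (g x)) + \int[mu]_(x in D) (complex.Im (f x) * complex.Im (g x)).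
Proof.
move=> rf if_ rg ig.
rewrite -RintegralD //; try exact: int_prod.
apply: eq_Rintegral => x _; rewrite reM /cconj /=; ring.
Qed.

Lemma rint_conjIm (f g : T -> R[i]) :
  sqi (fun x => complex.Re (f x)) -> sqi (fun x => complex.Im (f x)) ->
  sqi (fun x => complex.Re (g x)) -> sqi (fun x => complex.Im (g x)) ->
  \int[mu]_(x in D) complex.Im (cconj (f x) * g x) =
  \int[mu]_(x in D) (complex.Re (f x) * complex.Im (g x)) - \int[mu]_(x in D) (complex.Im (f x) * complex.Re (g x)).
Proof.
move=> rf if_ rg ig.
rewrite -RintegralB //; try exact: int_prod.
apply: eq_Rintegral => x _; rewrite imM /cconj /=; ring.
Qed.

Lemma rint_cabs2 (f : T -> R[i]) :
  sqi (fun x => complex.Re (f x)) -> sqi (fun x => complex.Im (f x)) ->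
  \int[mu]_(x in D) cabs2 (f x) =
  \int[mu]_(x in D) (complex.Re (f x) * complex.Re (f x)) + \int[mu]_(x in D) (complex.Im (f x) * complex.Im (f x)).
Proof.
move=> rf if_.
rewrite -RintegralD //; try exact: int_prod.
Qed.

Lemma rintZ k (f g : T -> R) : sqi f -> sqi g ->
  \int[mu]_(x in D) (k * (f x * g x)) = k * \int[mu]_(x in D) (f x * g x).
Proof. by move=> hf hg; rewrite RintegralZl //; exact: int_prod. Qed.

End Gen.

Lemma final (R : realType) (g1 g2 b1 b2 I a11 a21 a22 q1 q2 nH1 nH2 c12 r2 : R) :
  0 < g1 -> 0 < g2 -> 0 < b1 -> 0 < b2 -> 0 <= a21 -> 0 <= a22 ->
  nH1 = b1 * g1 -> nH2 = b2 * g2 -> c12 = b1 * b2 * I -> r2 = I / (g1 * g2) ->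
  c12 <= nH1 * nH2 ->
  a11 <= (nH1 - (a22 / (nH2 * (1 + a21))) * c12 / (1 + (a22 / (nH2 * (1 + a21))) * nH2))
         * (q1 + (a22 / (nH2 * (1 + a21))) * a21) ->
  a22 <= nH2 * q2 ->
  let P2 := a22 / (nH2 * (1 + a21)) in
  let P1 := a11 / (nH1 - P2 * c12 / (1 + P2 * nH2)) in
  let gam1 := b1 * P1 in let gam2 := b2 * P2 in
  log2 (1 + gam1 * g1 * (1 - gam2 * g2 * r2 / (1 + gam2 * g2))) + log2 (1 + gam2 * g2)
    = log2 (1 + a11) + log2 (1 + a22 / (1 + a21))
  /\ P1 + P2 <= q1 + q2.
Proof.
move=> g1p g2p b1p b2p a21p a22p e1 e2 e3 e4 CS K1 K2 P2 P1 gam1 gam2.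
have nH1p : 0 < nH1 by rewrite e1 mulr_gt0.
have nH2p : 0 < nH2 by rewrite e2 mulr_gt0.
have A1 : 0 < 1 + a21 by lra.
have P2p : 0 <= P2 by rewrite /P2 divr_ge0 // mulr_ge0 // ltW.
have Ep : 0 < 1 + P2 * nH2 by have := mulr_ge0 P2p (ltW nH2p); lra.
set Dd := nH1 - P2 * c12 / (1 + P2 * nH2).
have Dp : 0 < Dd.
  have -> : Dd = (nH1 + P2 * (nH1 * nH2 - c12)) / (1 + P2 * nH2).
    by rewrite /Dd; field; rewrite gt_eqF.
  apply: divr_gt0 => //.
  have := mulr_ge0 P2p (_ : 0 <= nH1 * nH2 - c12); rewrite subr_ge0 => /(_ CS); lra.
have eg2 : gam2 * g2 = P2 * nH2 by rewrite /gam2 e2; ring.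
have eP2 : P2 * nH2 = a22 / (1 + a21).
  by rewrite /P2; field; rewrite !gt_eqF.
have eD : b1 * g1 * (1 - P2 * nH2 * (I / (g1 * g2)) / (1 + P2 * nH2)) = Dd.
  move: Ep; rewrite /Dd e1 e3 e2 => Ep.
  by field; rewrite !gt_eqF.
have eg1 : gam1 * g1 * (1 - gam2 * g2 * r2 / (1 + gam2 * g2)) = a11.
  rewrite eg2 e4.
  have -> : gam1 * g1 * (1 - P2 * nH2 * (I / (g1 * g2)) / (1 + P2 * nH2)) =
    P1 * (b1 * g1 * (1 - P2 * nH2 * (I / (g1 * g2)) / (1 + P2 * nH2))) by rewrite /gam1; ring.
  by rewrite eD /P1 -/Dd divfK // gt_eqF.
split; first by rewrite eg1 eg2 eP2.
have h1 : P1 <= q1 + P2 * a21.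
  by rewrite /P1 -/Dd ler_pdivrMr // mulrC.
have h2 : P2 * (1 + a21) <= q2.
  have -> : P2 * (1 + a21) = a22 / nH2 by rewrite /P2; field; rewrite !gt_eqF.
  by rewrite ler_pdivrMr // mulrC.
move: h2; rewrite mulrDr mulr1; lra.
Qed.

Definition M3 (R : realType) := ((g_sigma_algebraType (R.-ocitv.-measurable) * g_sigma_algebraType (R.-ocitv.-measurable)) * g_sigma_algebraType (R.-ocitv.-measurable))%type.
Lemma mconv (R : realType) (A : set (R3 R)) : measurable A -> measurable (A : set (M3 R)).
Proof. exact. Qed.

Lemma cL2_sqi (R : realType) (A : set (R3 R)) f : measurable A -> cL2 A f ->
  sqi (@leb3 R) A (fun x => complex.Re (f x)) /\ sqi (@leb3 R) A (fun x => complex.Im (f x)).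
Proof.
move=> /(@mconv R A) mA [mRe mIm Iab]; split; split => //.
- apply: (le_integrable mA _ _ Iab).
    apply/measurable_EFinP.
    have -> : (fun x => complex.Re (f x) ^+ 2) = (fun x => complex.Re (f x) * complex.Re (f x)).
      by apply: funext => x; rewrite expr2.
    exact: measurable_funM.
  move=> x _ /=; rewrite lee_fin /cabs2 !ger0_norm ?addr_ge0 ?sqr_ge0 //.
  by rewrite lerDl sqr_ge0.
- apply: (le_integrable mA _ _ Iab).
    apply/measurable_EFinP.
    have -> : (fun x => complex.Im (f x) ^+ 2) = (fun x => complex.Im (f x) * complex.Im (f x)).
      by apply: funext => x; rewrite expr2.
    exact: measurable_funM.
  move=> x _ /=; rewrite lee_fin /cabs2 !ger0_norm ?addr_ge0 ?sqr_ge0 //.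
  by rewrite lerDr sqr_ge0.
Qed.

Lemma HhRe (R : realType) (t s : R) (z : R[i]) :
  complex.Re ((t%:C)%C * (('i * (s%:C))%C * z)) = - (t * s) * complex.Im z.
Proof. case: z => a b; rewrite /=; ring. Qed.

Lemma HhIm (R : realType) (t s : R) (z : R[i]) :
  complex.Im ((t%:C)%C * (('i * (s%:C))%C * z)) = (t * s) * complex.Re z.
Proof. case: z => a b; rewrite /=; ring. Qed.

Lemma tsq (R : realType) (Au sig k0 eta : R) : 0 <= Au -> sig != 0 ->
  (Num.sqrt Au / sig * (k0 * eta / Num.sqrt (4 * pi))) ^+ 2 =
  Au * k0 ^+ 2 * eta ^+ 2 / (4 * pi * sig ^+ 2).
Proof.
move=> Au0 s0.
have p0 : 0 < 4 * pi :> R by rewrite mulr_gt0 // pi_gt0.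
rewrite !exprMn !exprVn sqr_sqrtr // sqr_sqrtr ?ltW //.
move: p0; move: (pi : R) => pp p0.
have pp0 : pp != 0 by apply/negP => /eqP e; move: p0; rewrite e mulr0 ltxx.
by field; rewrite s0 pp0.
Qed.

Lemma cabs2_div (R : realType) (z : R[i]) (r : R) : r != 0 -> cabs2 (z / r%:C)%C = cabs2 z / r ^+ 2.
Proof. by move=> r0; case: z => a b; rewrite /cabs2 /=; field. Qed.

Lemma cabs2_ge0 (R : realType) (z : R[i]) : 0 <= cabs2 z.
Proof. by rewrite /cabs2 addr_ge0 ?sqr_ge0. Qed.

Theorem theorem4 (R : realType) (A : set (R3 R)) (k0 eta : R)
  (G1 G2 : R3 R -> R[i]) (Au1 Au2 sigma1 sigma2 P : R)
  (J1 J2 : R3 R -> R[i]) :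
  measurable A -> (0 < @leb3 R A)%E -> (@leb3 R A < +oo)%E ->
  0 < k0 -> 0 < eta ->
  cL2 A G1 -> cL2 A G2 ->
  0 < rint A (fun x => cabs2 (G1 x)) ->
  0 < rint A (fun x => cabs2 (G2 x)) ->
  0 < Au1 -> 0 < Au2 -> 0 < sigma1 -> 0 < sigma2 ->
  0 < P ->
  cL2 A J1 -> cL2 A J2 ->
  rint A (fun x => cabs2 (J1 x)) + rint A (fun x => cabs2 (J2 x)) <= P ->
  let g1 := rint A (fun x => cabs2 (G1 x)) in
  let g2 := rint A (fun x => cabs2 (G2 x)) in
  let c := ('i * (k0 * eta / Num.sqrt (4 * pi))%:C)%C in
  let H1 := fun x => c * G1 x in
  let H2 := fun x => c * G2 x in
  let Hh1 := fun x => (Num.sqrt Au1 / sigma1)%:C%C * H1 x in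
  let Hh2 := fun x => (Num.sqrt Au2 / sigma2)%:C%C * H2 x in
  let rho := cint A (fun x => cconj (G1 x) * G2 x) / (Num.sqrt (g1 * g2))%:C%C in
  let nH1 := rint A (fun x => cabs2 (Hh1 x)) in
  let nH2 := rint A (fun x => cabs2 (Hh2 x)) in
  let a11 := cabs2 (cint A (fun x => Hh1 x * J1 x)) in
  let a21 := cabs2 (cint A (fun x => Hh2 x * J1 x)) in
  let a22 := cabs2 (cint A (fun x => Hh2 x * J2 x)) in
  let c12 := cabs2 (cint A (fun x => cconj (Hh1 x) * Hh2 x)) in
  let P2 := a22 / (nH2 * (1 + a21)) in
  let P1 := a11 / (nH1 - P2 * c12 / (1 + P2 * nH2)) in
  let gam1 := Au1 * k0 ^+ 2 * eta ^+ 2 / (4 * pi * sigma1 ^+ 2) * P1 in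
  let gam2 := Au2 * k0 ^+ 2 * eta ^+ 2 / (4 * pi * sigma2 ^+ 2) * P2 in
  log2 (1 + gam1 * g1 * (1 - gam2 * g2 * cabs2 rho / (1 + gam2 * g2)))
    + log2 (1 + gam2 * g2)
  = log2 (1 + a11) + log2 (1 + a22 / (1 + a21))
  /\ P1 + P2 <= rint A (fun x => cabs2 (J1 x)) + rint A (fun x => cabs2 (J2 x))
  /\ rint A (fun x => cabs2 (J1 x)) + rint A (fun x => cabs2 (J2 x)) <= P.
Proof.
move=> mA _ _ k00 eta0 LG1 LG2 g1p g2p Au10 Au20 s10 s20 P0 LJ1 LJ2 HP.
move=> g1 g2 c H1 H2 Hh1 Hh2 rho nH1 nH2 a11 a21 a22 c12 P2 P1 gam1 gam2.
have mA' := @mconv R A mA.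
pose s := k0 * eta / Num.sqrt (4 * pi).
pose t1 := Num.sqrt Au1 / sigma1.
pose t2 := Num.sqrt Au2 / sigma2.
have [sRG1 sIG1] := @cL2_sqi R A _ mA LG1.
have [sRG2 sIG2] := @cL2_sqi R A _ mA LG2.
have [sRJ1 sIJ1] := @cL2_sqi R A _ mA LJ1.
have [sRJ2 sIJ2] := @cL2_sqi R A _ mA LJ2.
have ReH1 : forall x, complex.Re (Hh1 x) = - (t1 * s) * complex.Im (G1 x) by move=> x; exact: HhRe.
have ImH1 : forall x, complex.Im (Hh1 x) = (t1 * s) * complex.Re (G1 x) by move=> x; exact: HhIm.
have ReH2 : forall x, complex.Re (Hh2 x) = - (t2 * s) * complex.Im (G2 x) by move=> x; exact: HhRe.
have ImH2 : forall x, complex.Im (Hh2 x) = (t2 * s) * complex.Re (G2 x) by move=> x; exact: HhIm.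
have sRH1 : sqi (@leb3 R) A (fun x => complex.Re (Hh1 x)).
  by rewrite (funext ReH1); exact: (sqiZ _ _ mA').
have sIH1 : sqi (@leb3 R) A (fun x => complex.Im (Hh1 x)).
  by rewrite (funext ImH1); exact: (sqiZ _ _ mA').
have sRH2 : sqi (@leb3 R) A (fun x => complex.Re (Hh2 x)).
  by rewrite (funext ReH2); exact: (sqiZ _ _ mA').
have sIH2 : sqi (@leb3 R) A (fun x => complex.Im (Hh2 x)).
  by rewrite (funext ImH2); exact: (sqiZ _ _ mA').
have [_ _ IG1] := LG1.
have [_ _ IG2] := LG2.
have b1e : (t1 * s) ^+ 2 = Au1 * k0 ^+ 2 * eta ^+ 2 / (4 * pi * sigma1 ^+ 2).
  by apply: tsq; [exact: ltW | exact: lt0r_neq0].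
have b2e : (t2 * s) ^+ 2 = Au2 * k0 ^+ 2 * eta ^+ 2 / (4 * pi * sigma2 ^+ 2).
  by apply: tsq; [exact: ltW | exact: lt0r_neq0].
have pip : 0 < 4 * pi :> R by rewrite mulr_gt0 // pi_gt0.
have b1p : 0 < Au1 * k0 ^+ 2 * eta ^+ 2 / (4 * pi * sigma1 ^+ 2).
  have k2 := exprn_gt0 2 k00; have e2 := exprn_gt0 2 eta0; have sg := exprn_gt0 2 s10.
  by apply: divr_gt0; apply: mulr_gt0 => //; apply: mulr_gt0.
have b2p : 0 < Au2 * k0 ^+ 2 * eta ^+ 2 / (4 * pi * sigma2 ^+ 2).
  have k2 := exprn_gt0 2 k00; have e2 := exprn_gt0 2 eta0; have sg := exprn_gt0 2 s20.
  by apply: divr_gt0; apply: mulr_gt0 => //; apply: mulr_gt0.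
have enH1 : nH1 = Au1 * k0 ^+ 2 * eta ^+ 2 / (4 * pi * sigma1 ^+ 2) * g1.
  rewrite -b1e /nH1 /g1 /rint -RintegralZl //.
  by apply: eq_Rintegral => x _; rewrite /cabs2 ReH1 ImH1; ring.
have enH2 : nH2 = Au2 * k0 ^+ 2 * eta ^+ 2 / (4 * pi * sigma2 ^+ 2) * g2.
  rewrite -b2e /nH2 /g2 /rint -RintegralZl //.
  by apply: eq_Rintegral => x _; rewrite /cabs2 ReH2 ImH2; ring.
pose phi1 := fun n => nth (fun _ : R3 R => 0) [:: fun x => complex.Re (J1 x); fun x => complex.Im (J1 x);
   fun x => complex.Re (Hh1 x); fun x => complex.Im (Hh1 x);
   fun x => complex.Re (Hh2 x); fun x => complex.Im (Hh2 x)] n.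
have Hphi1 : forall n, sqi (@leb3 R) A (phi1 n).
  by case=> [|[|[|[|[|[|n]]]]]] //; rewrite /phi1 /= nth_nil; exact: (sqi0 _ _ mA').
pose m1 := fun i j => rint A (fun x => phi1 i x * phi1 j x).
have psd1 : forall cc, 0 <= @quad6 R m1 cc by exact: (psd6 _ _ mA' _ Hphi1).
pose phi2 := fun n => nth (fun _ : R3 R => 0) [:: fun x => complex.Re (J2 x); fun x => complex.Im (J2 x);
   fun x => complex.Re (Hh2 x); fun x => complex.Im (Hh2 x);
   fun x => complex.Re (Hh2 x); fun x => complex.Im (Hh2 x)] n.
have Hphi2 : forall n, sqi (@leb3 R) A (phi2 n).
  by case=> [|[|[|[|[|[|n]]]]]] //; rewrite /phi2 /= nth_nil; exact: (sqi0 _ _ mA').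
pose m2 := fun i j => rint A (fun x => phi2 i x * phi2 j x).
have psd2 : forall cc, 0 <= @quad6 R m2 cc by exact: (psd6 _ _ mA' _ Hphi2).
have nH2p : 0 < nH2 by rewrite enH2 mulr_gt0.
have a21p : 0 <= a21 by exact: cabs2_ge0.
have a22p : 0 <= a22 by exact: cabs2_ge0.
have P2p : 0 <= P2.
  have h : 0 <= 1 + a21 by lra.
  by rewrite /P2 divr_ge0 // mulr_ge0 // ltW.
have [CS K1] := @keyM' R m1 P2 (rint A (fun x => cabs2 (J1 x))) nH1 nH2
  (rint A (fun x => complex.Re (Hh1 x * J1 x))) (rint A (fun x => complex.Im (Hh1 x * J1 x)))
  (rint A (fun x => complex.Re (Hh2 x * J1 x))) (rint A (fun x => complex.Im (Hh2 x * J1 x)))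
  (rint A (fun x => complex.Re (cconj (Hh1 x) * Hh2 x))) (rint A (fun x => complex.Im (cconj (Hh1 x) * Hh2 x)))
  P2p psd1
  ltac:(rewrite /m1 /m2 /phi1 /phi2 /rint /=; exact: (rint_cabs2 _ _ mA' _ sRJ1 sIJ1))
  ltac:(rewrite /m1 /m2 /phi1 /phi2 /rint /=; exact: (rint_cabs2 _ _ mA' _ sRH1 sIH1))
  ltac:(rewrite /m1 /m2 /phi1 /phi2 /rint /=; exact: (rint_cabs2 _ _ mA' _ sRH2 sIH2))
  ltac:(rewrite /m1 /m2 /phi1 /phi2 /rint /=; exact: (rint_mulRe _ _ mA' _ _ sRJ1 sIJ1 sRH1 sIH1))
  ltac:(rewrite /m1 /m2 /phi1 /phi2 /rint /=; exact: (rint_mulIm _ _ mA' _ _ sRJ1 sIJ1 sRH1 sIH1))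
  ltac:(rewrite /m1 /m2 /phi1 /phi2 /rint /=; exact: (rint_mulRe _ _ mA' _ _ sRJ1 sIJ1 sRH2 sIH2))
  ltac:(rewrite /m1 /m2 /phi1 /phi2 /rint /=; exact: (rint_mulIm _ _ mA' _ _ sRJ1 sIJ1 sRH2 sIH2))
  ltac:(rewrite /m1 /m2 /phi1 /phi2 /rint /=; exact: (rint_conjRe _ _ mA' _ _ sRH1 sIH1 sRH2 sIH2))
  ltac:(rewrite /m1 /m2 /phi1 /phi2 /rint /=; exact: (rint_conjIm _ _ mA' _ _ sRH1 sIH1 sRH2 sIH2))
  nH2p.
have [_ K2] := @keyM' R m2 0 (rint A (fun x => cabs2 (J2 x))) nH2 nH2
  (rint A (fun x => complex.Re (Hh2 x * J2 x))) (rint A (fun x => complex.Im (Hh2 x * J2 x)))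
  (rint A (fun x => complex.Re (Hh2 x * J2 x))) (rint A (fun x => complex.Im (Hh2 x * J2 x)))
  (rint A (fun x => complex.Re (cconj (Hh2 x) * Hh2 x))) (rint A (fun x => complex.Im (cconj (Hh2 x) * Hh2 x)))
  (lexx 0) psd2
  ltac:(rewrite /m1 /m2 /phi1 /phi2 /rint /=; exact: (rint_cabs2 _ _ mA' _ sRJ2 sIJ2))
  ltac:(rewrite /m1 /m2 /phi1 /phi2 /rint /=; exact: (rint_cabs2 _ _ mA' _ sRH2 sIH2))
  ltac:(rewrite /m1 /m2 /phi1 /phi2 /rint /=; exact: (rint_cabs2 _ _ mA' _ sRH2 sIH2))
  ltac:(rewrite /m1 /m2 /phi1 /phi2 /rint /=; exact: (rint_mulRe _ _ mA' _ _ sRJ2 sIJ2 sRH2 sIH2))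
  ltac:(rewrite /m1 /m2 /phi1 /phi2 /rint /=; exact: (rint_mulIm _ _ mA' _ _ sRJ2 sIJ2 sRH2 sIH2))
  ltac:(rewrite /m1 /m2 /phi1 /phi2 /rint /=; exact: (rint_mulRe _ _ mA' _ _ sRJ2 sIJ2 sRH2 sIH2))
  ltac:(rewrite /m1 /m2 /phi1 /phi2 /rint /=; exact: (rint_mulIm _ _ mA' _ _ sRJ2 sIJ2 sRH2 sIH2))
  ltac:(rewrite /m1 /m2 /phi1 /phi2 /rint /=; exact: (rint_conjRe _ _ mA' _ _ sRH2 sIH2 sRH2 sIH2))
  ltac:(rewrite /m1 /m2 /phi1 /phi2 /rint /=; exact: (rint_conjIm _ _ mA' _ _ sRH2 sIH2 sRH2 sIH2))
  nH2p.
pose k := t1 * s * (t2 * s).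
have r1 : \int[@leb3 R]_(x in A) (complex.Re (Hh1 x) * complex.Re (Hh2 x)) =
    k * \int[@leb3 R]_(x in A) (complex.Im (G1 x) * complex.Im (G2 x)).
  rewrite -(rintZ _ _ mA' k _ _ sIG1 sIG2); apply: eq_Rintegral => x _.
  by rewrite ReH1 ReH2 /k; ring.
have r2 : \int[@leb3 R]_(x in A) (complex.Im (Hh1 x) * complex.Im (Hh2 x)) =
    k * \int[@leb3 R]_(x in A) (complex.Re (G1 x) * complex.Re (G2 x)).
  rewrite -(rintZ _ _ mA' k _ _ sRG1 sRG2); apply: eq_Rintegral => x _.
  by rewrite ImH1 ImH2 /k; ring.
have r3 : \int[@leb3 R]_(x in A) (complex.Re (Hh1 x) * complex.Im (Hh2 x)) =
    (- k) * \int[@leb3 R]_(x in A) (complex.Im (G1 x) * complex.Re (G2 x)).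
  rewrite -(rintZ _ _ mA' (- k) _ _ sIG1 sRG2); apply: eq_Rintegral => x _.
  by rewrite ReH1 ImH2 /k; ring.
have r4 : \int[@leb3 R]_(x in A) (complex.Im (Hh1 x) * complex.Re (Hh2 x)) =
    (- k) * \int[@leb3 R]_(x in A) (complex.Re (G1 x) * complex.Im (G2 x)).
  rewrite -(rintZ _ _ mA' (- k) _ _ sRG1 sIG2); apply: eq_Rintegral => x _.
  by rewrite ImH1 ReH2 /k; ring.
pose I := cint A (fun x => cconj (G1 x) * G2 x).
have ec12 : c12 = Au1 * k0 ^+ 2 * eta ^+ 2 / (4 * pi * sigma1 ^+ 2) *
   (Au2 * k0 ^+ 2 * eta ^+ 2 / (4 * pi * sigma2 ^+ 2)) * cabs2 I.
  have -> : c12 = (rint A (fun x => complex.Re (cconj (Hh1 x) * Hh2 x))) ^+ 2 +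
      (rint A (fun x => complex.Im (cconj (Hh1 x) * Hh2 x))) ^+ 2 by [].
  have -> : cabs2 I = (rint A (fun x => complex.Re (cconj (G1 x) * G2 x))) ^+ 2 +
      (rint A (fun x => complex.Im (cconj (G1 x) * G2 x))) ^+ 2 by [].
  rewrite /rint (rint_conjRe _ _ mA' _ _ sRH1 sIH1 sRH2 sIH2) (rint_conjIm _ _ mA' _ _ sRH1 sIH1 sRH2 sIH2).
  rewrite (rint_conjRe _ _ mA' _ _ sRG1 sIG1 sRG2 sIG2) (rint_conjIm _ _ mA' _ _ sRG1 sIG1 sRG2 sIG2).
  rewrite r1 r2 r3 r4 -b1e -b2e /k; ring.
have gg : 0 < g1 * g2 by rewrite mulr_gt0.
have er2 : cabs2 rho = cabs2 I / (g1 * g2).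
  rewrite /rho cabs2_div ?sqr_sqrtr ?ltW //.
  by rewrite gt_eqF // sqrtr_gt0.
have K2' : a22 <= nH2 * rint A (fun x => cabs2 (J2 x)).
  by move: K2; rewrite !mul0r !subr0 !addr0.
case: (@final R g1 g2 _ _ (cabs2 I) a11 a21 a22 (rint A (fun x => cabs2 (J1 x)))
   (rint A (fun x => cabs2 (J2 x))) nH1 nH2 c12 (cabs2 rho) g1p g2p b1p b2p a21p a22p
   enH1 enH2 ec12 er2 CS K1 K2') => F1 F2.
split; first exact: F1.
by split.
Qed.
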